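(* If $\mathcal A\subseteq\binom{[n]}{k}$ is $t$-intersecting, then for every $1\le i<j\le n$, \[\zeta_{k-1}(\Delta_{ij}(\mathcal A))\ge\zeta_{k-1}(\mathcal A).\]
   Context: A family is $t$-intersecting if any two members share at least $t$ elements. For $\mathcal F\subseteq\binom{[n]}{k}$, $\zeta_{k-1}(\mathcal F)=|\{\{F,G\}:F,G\in\mathcal F,\ |F\cap G|=k-1\}|$. Shift operation: for $i,j\in[n]$ and $A\in\mathcal A$, $\delta_{ij}(A)=(A\setminus\{j\})\cup\{i\}$ if $j\in A$, $i\notin A$ and $(A\setminus\{j\})\cup\{i\}\notin\mathcal A$; otherwise $\delta_{ij}(A)=A$. Then $\Delta_{ij}(\mathcal A)=\{\delta_{ij}(A):A\in\mathcal A\}$. *)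

(* Defs.v *)
From mathcomp Require Import all_boot.
Set Implicit Arguments. Unset Strict Implicit. Unset Printing Implicit Defensive.

(* Ground set [n] is modelled as 'I_n (0-based); families are {set {set 'I_n}}. *)

Definition uniform (n k : nat) (A : {set {set 'I_n}}) : Prop :=
  forall F, F \in A -> #|F| = k.

Definition t_intersecting (n t : nat) (A : {set {set 'I_n}}) : Prop :=
  forall F G, F \in A -> G \in A -> F != G -> t <= #|F :&: G|.

Definition zeta_km1 (n k : nat) (A : {set {set 'I_n}}) : nat :=
  #|[set P : {set {set 'I_n}} |
      [exists F in A, exists G in A,
         [&& F != G, P == [set F; G] & #|F :&: G| == k.-1]]]|.

Definition delta (n : nat) (i j : 'I_n) (A : {set {set 'I_n}}) (F : {set 'I_n})
  : {set 'I_n} :=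
  if [&& j \in F, i \notin F & (i |: (F :\ j)) \notin A]
  then i |: (F :\ j) else F.

Definition Delta (n : nat) (i j : 'I_n) (A : {set {set 'I_n}}) : {set {set 'I_n}} :=
  [set delta i j A F | F in A].

(* Main.v *)
Require Import Defs.
From mathcomp Require Import all_boot.

Set Implicit Arguments. Unset Strict Implicit. Unset Printing Implicit Defensive.

Definition sw (n : nat) (i j : 'I_n) (x : 'I_n) : 'I_n :=
  if x == i then j else if x == j then i else x.

Lemma swK n (i j : 'I_n) : involutive (sw i j).
Proof.
move=> x; rewrite /sw.
case: (eqVneq x i) => [->|xi]; first by rewrite eqxx; case: eqVneq => [->|].
case: (eqVneq x j) => [->|xj]; first by rewrite eqxx.
by rewrite (negbTE xi) (negbTE xj).
Qed.

Lemma sw_inj n (i j : 'I_n) : injective (sw i j).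
Proof. exact: can_inj (swK i j). Qed.

Definition ss n (i j : 'I_n) (F : {set 'I_n}) : {set 'I_n} := sw i j @: F.

Lemma mem_ss n (i j : 'I_n) (F : {set 'I_n}) x : (x \in ss i j F) = (sw i j x \in F).
Proof. by rewrite /ss -{1}(swK i j x) mem_imset //; apply: sw_inj. Qed.

Lemma ssK n (i j : 'I_n) : involutive (ss i j).
Proof. by move=> F; apply/setP => x; rewrite !mem_ss swK. Qed.

Lemma ss_inj n (i j : 'I_n) : injective (ss i j).
Proof. exact: can_inj (ssK i j). Qed.

Lemma card_ss n (i j : 'I_n) (F : {set 'I_n}) : #|ss i j F| = #|F|.
Proof. by rewrite card_imset //; apply: sw_inj. Qed.

Lemma ssI n (i j : 'I_n) (F G : {set 'I_n}) : ss i j (F :&: G) = ss i j F :&: ss i j G.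
Proof. by apply/setP => x; rewrite !(inE, mem_ss). Qed.

Lemma ss_moved n (i j : 'I_n) (F : {set 'I_n}) : i != j -> j \in F -> i \notin F ->
  ss i j F = i |: (F :\ j).
Proof.
move=> ij jF iF; apply/setP => x; rewrite mem_ss !inE /sw.
case: (eqVneq x i) => [->|xi] //=.
case: (eqVneq x j) => [->|xj] //=; by rewrite (negbTE iF).
Qed.

Lemma ss_fix n (i j : 'I_n) (G : {set 'I_n}) : (j \in G) = (i \in G) -> ss i j G = G.
Proof.
move=> e; apply/setP => x; rewrite mem_ss /sw.
case: (eqVneq x i) => [->|xi]; first exact: e.
by case: (eqVneq x j) => [->|xj] //; rewrite e.
Qed.

Lemma mem_ss_i n (i j : 'I_n) (G : {set 'I_n}) : (i \in ss i j G) = (j \in G).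
Proof. by rewrite mem_ss /sw eqxx. Qed.

Lemma set2C (T : finType) (a b : T) : [set a; b] = [set b; a].
Proof. by apply/setP => x; rewrite !inE orbC. Qed.

Lemma imset2 (T U : finType) (f : T -> U) (a b : T) :
  f @: [set a; b] = [set f a; f b].
Proof. by rewrite imsetU1 imset_set1. Qed.

Lemma pair_eq (T : finType) (a b c d : T) :
  [set a; b] = [set c; d] -> (a = c /\ b = d) \/ (a = d /\ b = c).
Proof.
move=> E.
have : a \in [set c; d] by rewrite -E !inE eqxx.
have : b \in [set c; d] by rewrite -E !inE eqxx orbT.
have : c \in [set a; b] by rewrite E !inE eqxx.
have : d \in [set a; b] by rewrite E !inE eqxx orbT.
rewrite !inE => /orP[]/eqP h1 /orP[]/eqP h2 /orP[]/eqP h3 /orP[]/eqP h4;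
  subst; auto.
Qed.

Definition Z n k (B : {set {set 'I_n}}) : {set {set {set 'I_n}}} :=
  [set P : {set {set 'I_n}} |
      [exists F in B, exists G in B,
         [&& F != G, P == [set F; G] & #|F :&: G| == k.-1]]].

Lemma ZI n k (B : {set {set 'I_n}}) F G :
  F \in B -> G \in B -> F != G -> #|F :&: G| = k.-1 -> [set F; G] \in Z k B.
Proof.
move=> FB GB FG c; rewrite inE; apply/existsP; exists F; rewrite FB /=.
by apply/existsP; exists G; rewrite GB FG eqxx c eqxx.
Qed.

Lemma ZE n k (B : {set {set 'I_n}}) P : P \in Z k B ->
  exists F, exists G,
    [/\ P = [set F; G], F \in B, G \in B, F != G & #|F :&: G| = k.-1].
Proof.
rewrite inE => /existsP[F /andP[FB /existsP[G /andP[GB /and3P[FG /eqP-> /eqP c]]]]].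
by exists F, G.
Qed.

Lemma ZE2 n k (B : {set {set 'I_n}}) F G : [set F; G] \in Z k B ->
  [/\ F \in B, G \in B, F != G & #|F :&: G| = k.-1].
Proof.
move=> /ZE[F' [G' [E FB GB FG c]]].
case: (pair_eq E) => [[-> ->]|[-> ->]]; first by [].
by rewrite eq_sym setIC.
Qed.

Definition mv n (i j : 'I_n) (A : {set {set 'I_n}}) (F : {set 'I_n}) :=
  [&& j \in F, i \notin F & ss i j F \notin A].

Lemma deltaE n (i j : 'I_n) (A : {set {set 'I_n}}) (F : {set 'I_n}) : i != j ->
  delta i j A F = if mv i j A F then ss i j F else F.
Proof.
move=> ij; rewrite /delta /mv.
case: (boolP (j \in F)) => //= jF; case: (boolP (i \in F)) => //= iF.
by rewrite ss_moved.
Qed.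

Lemma dinj n (i j : 'I_n) (A : {set {set 'I_n}}) : i != j -> {in A &, injective (delta i j A)}.
Proof.
move=> ij F G FA GA; rewrite !deltaE //.
case mF: (mv i j A F); case mG: (mv i j A G) => //.
- exact: ss_inj.
- move=> E; move: mF; rewrite /mv E => /and3P[_ _]; by rewrite GA.
- move=> E; move: mG; rewrite /mv -E => /and3P[_ _]; by rewrite FA.
Qed.

Lemma dinj' n (i j : 'I_n) (A : {set {set 'I_n}}) F G : i != j ->
  F \in A -> G \in A -> delta i j A F = delta i j A G -> F = G.
Proof. by move=> ij; apply: dinj. Qed.

Lemma mem_Delta n (i j : 'I_n) (A : {set {set 'I_n}}) (F : {set 'I_n}) : F \in A -> delta i j A F \in Delta i j A.
Proof. by move=> FA; rewrite /Delta imset_f. Qed.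

Lemma one_moved n k (i j : 'I_n) (A : {set {set 'I_n}}) F G :
  uniform k A -> i != j -> F \in A -> G \in A -> #|F :&: G| = k.-1 ->
  mv i j A F -> ~~ mv i j A G ->
  ss i j G = G \/ (ss i j G \in A /\ delta i j A (ss i j G) = ss i j G).
Proof.
move=> uA ij FA GA c /and3P[jF iF sFA] mG.
case jG: (j \in G); case iG: (i \in G).
- by left; rewrite ss_fix // jG iG.
- right; have sGA : ss i j G \in A.
    by move: mG; rewrite /mv jG iG /= negbK.
  split=> //; rewrite deltaE // /mv mem_ss_i jG /=.
  by case: (j \in ss i j G).
- exfalso.
  have sub : i |: (F :&: G) \subset ss i j F :&: G.
    rewrite ss_moved //; apply/subsetP => x; rewrite !inE.
    case/orP => [/eqP->|/andP[xF xG]]; first by rewrite eqxx iG.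
    rewrite xF xG ?orbT ?andbT /=; apply/orP; right; apply/eqP => xj.
    by rewrite xj jG in xG.
  have k0 : 0 < k by rewrite -(uA F FA); apply/card_gt0P; exists j.
  have c1 : #|i |: (F :&: G)| = k.
    by rewrite cardsU1 c !inE (negbTE iF) /= add1n prednK.
  have e1 : ss i j F :&: G = G.
    apply/eqP; rewrite eqEcard subsetIr /= (uA G GA) -c1.
    exact: subset_leq_card.
  have e2 : G = ss i j F.
    apply/eqP; rewrite eqEcard card_ss (uA G GA) (uA F FA) leqnn andbT.
    by rewrite -e1 subsetIl.
  by rewrite -e2 GA in sFA.
- by left; rewrite ss_fix // jG iG.
Qed.

Lemma both_same n k (i j : 'I_n) (A : {set {set 'I_n}}) F G :
  i != j -> F \in A -> G \in A -> F != G -> #|F :&: G| = k.-1 ->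
  mv i j A F = mv i j A G ->
  [set delta i j A F; delta i j A G] \in Z k (Delta i j A).
Proof.
move=> ij FA GA FG c e; apply: ZI; try exact: mem_Delta.
  by apply: contra FG => /eqP/(dinj' ij FA GA)->.
rewrite !deltaE // -e; case: (mv i j A F) => //.
by rewrite -ssI card_ss.
Qed.

Lemma good1 n k (i j : 'I_n) (A : {set {set 'I_n}}) F G :
  uniform k A -> i != j -> F \in A -> G \in A -> F != G -> #|F :&: G| = k.-1 ->
  mv i j A F -> ~~ mv i j A G ->
  [set ss i j F; ss i j G] \in Z k (Delta i j A).
Proof.
move=> uA ij FA GA FG c mF mG; apply: ZI.
- by have := mem_Delta i j FA; rewrite deltaE // mF.
- case: (one_moved uA ij FA GA c mF mG) => [->|[sGA <-]].
    by have := mem_Delta i j GA; rewrite deltaE // (negbTE mG).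
  exact: mem_Delta.
- by rewrite (inj_eq (@ss_inj _ i j)).
- by rewrite -ssI card_ss.
Qed.

Lemma case3 n k (i j : 'I_n) (A : {set {set 'I_n}}) F G H K :
  uniform k A -> i != j -> F \in A -> G \in A -> H \in A -> K \in A ->
  F != G -> #|F :&: G| = k.-1 -> H != K -> #|H :&: K| = k.-1 ->
  mv i j A H -> ~~ mv i j A K ->
  [set delta i j A F; delta i j A G] \in Z k (Delta i j A) ->
  [set delta i j A H; delta i j A K] \notin Z k (Delta i j A) ->
  [set delta i j A F; delta i j A G] = [set ss i j H; ss i j K] -> False.
Proof.
move=> uA ij FA GA HA KA FG cFG HK cHK mH mK zP zQ E.
have dH : delta i j A H = ss i j H by rewrite deltaE // mH.
have dK : delta i j A K = K by rewrite deltaE // (negbTE mK).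
case: (one_moved uA ij HA KA cHK mH mK) => [sK|[sKA dsK]].
  by move: zQ; rewrite dH dK -{1}sK -E zP.
have cHsK : #|H :&: ss i j K| = k.-1.
  have E' : [set delta i j A F; delta i j A G] =
            [set delta i j A H; delta i j A (ss i j K)] by rewrite dH dsK.
  case/pair_eq: E' => [[e1 e2]|[e1 e2]].
    by rewrite -(dinj' ij FA HA e1) -(dinj' ij GA sKA e2).
  by rewrite -(dinj' ij GA HA e2) -(dinj' ij FA sKA e1) setIC.
move/negP: zQ; apply; apply: (ZI); try exact: mem_Delta.
  by apply: contra HK => /eqP/(dinj' ij HA KA)->.
by rewrite dH dK -(card_ss i j) ssI ssK.
Qed.

Lemma case3' n k (i j : 'I_n) (A : {set {set 'I_n}}) F G H K :
  uniform k A -> i != j -> F \in A -> G \in A -> H \in A -> K \in A ->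
  F != G -> #|F :&: G| = k.-1 -> H != K -> #|H :&: K| = k.-1 ->
  [set delta i j A F; delta i j A G] \in Z k (Delta i j A) ->
  [set delta i j A H; delta i j A K] \notin Z k (Delta i j A) ->
  [set delta i j A F; delta i j A G] = [set ss i j H; ss i j K] -> False.
Proof.
move=> uA ij FA GA HA KA FG cFG HK cHK zP zQ E.
case mH: (mv i j A H); case mK: (mv i j A K).
- by move: zQ; rewrite both_same // mH mK.
- by apply: (case3 uA ij FA GA HA KA) => //; rewrite mK.
- apply: (case3 uA ij FA GA KA HA) => //; first by rewrite eq_sym.
  + by rewrite setIC.
  + by rewrite mH.
  + by rewrite set2C.
  + by rewrite E set2C.
- by move: zQ; rewrite both_same // mH mK.
Qed.

Theorem lemma2p2 (n k t : nat) (A : {set {set 'I_n}}) :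
  uniform k A -> t_intersecting t A ->
  forall i j : 'I_n, (i < j)%N ->
    (zeta_km1 k A <= zeta_km1 k (Delta i j A))%N.
Proof.
move=> uA _ i j lij.
have ij : i != j by apply/eqP => e; rewrite e ltnn in lij.
set D := Delta i j A.
pose f := fun P : {set {set 'I_n}} =>
  if delta i j A @: P \in Z k D then delta i j A @: P else ss i j @: P.
change (#|Z k A| <= #|Z k D|).
have sub : f @: Z k A \subset Z k D.
  apply/subsetP => _ /imsetP[P /ZE[F [G [-> FA GA FG c]]] ->].
  rewrite /f imset2; case: ifP => // /negbT z; rewrite imset2.
  case mF: (mv i j A F); case mG: (mv i j A G).
  - by move: z; rewrite both_same // mF mG.
  - by apply: good1 => //; rewrite mG.
  - rewrite set2C; apply: good1 => //; first by rewrite eq_sym.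
    + by rewrite setIC.
    + by rewrite mF.
  - by move: z; rewrite both_same // mF mG.
have inj : {in Z k A &, injective f}.
  move=> P Q /ZE[F [G [-> FA GA FG c]]] /ZE[H [K [-> HA KA HK c']]].
  rewrite /f !imset2; case: ifP => z1; case: ifP => z2.
  - move/pair_eq => [[e1 e2]|[e1 e2]].
      by rewrite (dinj' ij FA HA e1) (dinj' ij GA KA e2).
    by rewrite (dinj' ij FA KA e1) (dinj' ij GA HA e2) set2C.
  - move=> E; exfalso.
    exact: (case3' uA ij FA GA HA KA FG c HK c' z1 (negbT z2) E).
  - move=> E; exfalso.
    exact: (case3' uA ij HA KA FA GA HK c' FG c z2 (negbT z1) (esym E)).
  - move/pair_eq => [[e1 e2]|[e1 e2]].
      by rewrite (ss_inj e1) (ss_inj e2).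
    by rewrite (ss_inj e1) (ss_inj e2) set2C.
rewrite -(card_in_imset inj); exact: subset_leq_card.
Qed.
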